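(* For every $M\in\Lambda$, for every term $t$ with $[\![M]\!]\rightarrow^* t$ in $\Phi$, and for every occurrence of a constructor $c_{x,N}$ in $t$, $N$ is a subterm of $M$.
   Context: $\lambda$-terms: $M::=x\mid\lambda x.M\mid MN$, $x$ from a denumerable set $\Upsilon$ of variables with a fixed total order; $\Lambda$ is the set of terms; $FV(M)$ is the ordered sequence of free variables. $\Phi$ is the constructor rewrite system with binary function symbol $\mathbf{app}$ and, for every $M\in\Lambda$, $x\in\Upsilon$, a constructor $c_{x,M}$ of arity the length of $FV(\lambda x.M)$. $[\![x]\!]=x$, $[\![\lambda x.M]\!]=c_{x,M}(x_1,\dots,x_n)$ with $FV(\lambda x.M)=x_1,\dots,x_n$, $[\![MN]\!]=\mathbf{app}([\![M]\!],[\![N]\!])$. Rules: $\mathbf{app}(c_{x,M}(x_1,\dots,x_n),x)\rightarrow[\![M]\!]$ with $FV(\lambda x.M)=x_1,\dots,x_n$. Rewriting is call-by-value: a step replaces anywhere a subterm $l\sigma$ by $r\sigma$, $l\rightarrow r$ a rule, $\sigma$ mapping variables to constructor terms (closed terms built only from constructors). *)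

(* Defs.v *)
From Stdlib Require Import List Relations.
From mathcomp Require Import all_boot.

Set Implicit Arguments.
Unset Strict Implicit.

(* Variables: the denumerable set Upsilon, represented by nat with its
   usual total order. *)
Definition var := nat.

Inductive lam : Type :=
| Var : var -> lam
| Lam : var -> lam -> lam
| App : lam -> lam -> lam.

Fixpoint fv_raw (M : lam) : seq var :=
  match M with
  | Var x => [:: x]
  | Lam x M => filter (fun y => y != x) (fv_raw M)
  | App M N => fv_raw M ++ fv_raw N
  end.

Definition FV (M : lam) : seq var := sort leq (undup (fv_raw M)).

Inductive subterm : lam -> lam -> Prop :=
| sub_refl M : subterm M M
| sub_lam N x M : subterm N M -> subterm N (Lam x M)
| sub_appl N M1 M2 : subterm N M1 -> subterm N (App M1 M2)
| sub_appr N M1 M2 : subterm N M2 -> subterm N (App M1 M2).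

(* Terms of the constructor rewrite system Phi: variables, the binary
   function symbol app, and constructors c_{x,M} applied to arguments. *)
Inductive term : Type :=
| TVar : var -> term
| Tapp : term -> term -> term
| TC : var -> lam -> list term -> term.

Definition arity (x : var) (M : lam) : nat := size (FV (Lam x M)).

Inductive ctor_term : term -> Prop :=
| ctor_intro x M args :
    length args = arity x M ->
    Forall ctor_term args -> ctor_term (TC x M args).

Fixpoint tr (M : lam) : term :=
  match M with
  | Var x => TVar x
  | Lam x N => TC x N (map TVar (FV (Lam x N)))
  | App M N => Tapp (tr M) (tr N)
  end.

Fixpoint subst (s : var -> term) (t : term) : term :=
  match t with
  | TVar y => s y
  | Tapp u v => Tapp (subst s u) (subst s v)
  | TC y N args => TC y N (map (subst s) args)
  end.

(* One call-by-value step: the rule  app(c_{x,M}(x1..xn), x) -> [[M]]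
   (FV(\x.M) = x1..xn) instantiated by a substitution mapping variables
   to constructor terms, applied anywhere in the term. *)
Inductive step : term -> term -> Prop :=
| step_root (x : var) (M : lam) (s : var -> term) :
    (forall y, ctor_term (s y)) ->
    step (subst s (Tapp (TC x M (map TVar (FV (Lam x M)))) (TVar x)))
         (subst s (tr M))
| step_appl u u' v : step u u' -> step (Tapp u v) (Tapp u' v)
| step_appr u v v' : step v v' -> step (Tapp u v) (Tapp u v')
| step_arg y N l1 a a' l2 :
    step a a' -> step (TC y N (l1 ++ a :: l2)) (TC y N (l1 ++ a' :: l2)).

Definition steps : term -> term -> Prop := clos_refl_trans term step.

Inductive occurs (x : var) (N : lam) : term -> Prop :=
| occ_here args : occurs x N (TC x N args)
| occ_arg y M args a : In a args -> occurs x N a -> occurs x N (TC y M args)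
| occ_appl u v : occurs x N u -> occurs x N (Tapp u v)
| occ_appr u v : occurs x N v -> occurs x N (Tapp u v).

(* Main.v *)
Require Import Defs.
From Stdlib Require Import List Relations.
From mathcomp Require Import all_boot.
Set Implicit Arguments.

Inductive var_in (y : var) : term -> Prop :=
| vi_var : var_in y (TVar y)
| vi_appl u v : var_in y u -> var_in y (Tapp u v)
| vi_appr u v : var_in y v -> var_in y (Tapp u v)
| vi_arg z P args a : In a args -> var_in y a -> var_in y (TC z P args).

Lemma In_mem (T : eqType) (a : T) l : In a l <-> a \in l.
Proof.
  elim: l => [|b l IH] //=. rewrite inE; split.
  - by case=> [->|/IH ->]; rewrite ?eqxx ?orbT.
  - by case/orP=> [/eqP ->|/IH]; auto.
Qed.

Lemma subterm_trans A B C : subterm A B -> subterm B C -> subterm A C.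
Proof. intros H1 H2; induction H2; auto using subterm. Qed.

Lemma occ_subst x N s u : occurs x N u -> forall t, u = subst s t ->
  occurs x N t \/ exists y, var_in y t /\ occurs x N (s y).
Proof.
  induction 1 as [args|y M args a Hin Ho IH|u v Ho IH|u v Ho IH]; intros t Ht.
  - destruct t as [z|t1 t2|z P l]; simpl in Ht; try discriminate.
    + right; exists z; split; [constructor|rewrite <- Ht; constructor].
    + inversion Ht; subst; left; constructor.
  - destruct t as [z|t1 t2|z P l]; simpl in Ht; try discriminate.
    + right; exists z; split; [constructor|rewrite <- Ht; econstructor; eauto].
    + inversion Ht; subst. apply in_map_iff in Hin as [b [Hb Hbl]].
      destruct (IH b (esym Hb)) as [H|[w [H1 H2]]].
      * left; econstructor; eauto.
      * right; exists w; split; auto; econstructor; eauto.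
  - destruct t as [z|t1 t2|z P l]; simpl in Ht; try discriminate.
    + right; exists z; split; [constructor|rewrite <- Ht; constructor; auto].
    + inversion Ht; subst. destruct (IH t1 erefl) as [H|[w [H1 H2]]].
      * left; constructor; auto.
      * right; exists w; split; auto; constructor; auto.
  - destruct t as [z|t1 t2|z P l]; simpl in Ht; try discriminate.
    + right; exists z; split; [constructor|rewrite <- Ht; apply occ_appr; auto].
    + inversion Ht; subst. destruct (IH t2 erefl) as [H|[w [H1 H2]]].
      * left; apply occ_appr; auto.
      * right; exists w; split; auto; apply vi_appr; auto.
Qed.

Lemma occ_subst_back x N s y t : var_in y t -> occurs x N (s y) ->
  occurs x N (subst s t).
Proof.
  induction 1; intros Ho; simpl.
  - exact Ho.
  - apply occ_appl; auto.
  - apply occ_appr; auto.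
  - econstructor; [apply in_map; eauto | auto].
Qed.

Lemma occ_tr x N M : occurs x N (tr M) -> subterm N M.
Proof.
  induction M as [z|z P IH|M1 IH1 M2 IH2]; simpl; intros H; inversion H; subst.
  - constructor; constructor.
  - match goal with Hin : In _ _ |- _ => apply in_map_iff in Hin as [b [Hb _]] end.
    subst. match goal with Ho : occurs _ _ (TVar _) |- _ => inversion Ho end.
  - apply sub_appl; auto.
  - apply sub_appr; auto.
Qed.

Lemma FV_mem y L : (y \in FV L) = (y \in fv_raw L).
Proof. by rewrite /FV mem_sort mem_undup. Qed.

Lemma var_tr y M : var_in y (tr M) -> y \in fv_raw M.
Proof.
  induction M as [z|z P IH|M1 IH1 M2 IH2]; intros H; simpl in H; inversion H; subst.
  - by rewrite /= inE.
  - match goal with Hin : In _ _ |- _ => apply in_map_iff in Hin as [b [Hb Hin]] end.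
    subst. match goal with Ho : var_in _ (TVar _) |- _ => inversion Ho end; subst.
    rewrite -FV_mem. by apply/In_mem.
  - by rewrite /= mem_cat IH1.
  - by rewrite /= mem_cat IH2 ?orbT.
Qed.

Lemma step_occ u v : step u v -> forall x N, occurs x N v ->
  exists y P, occurs y P u /\ subterm N P.
Proof.
  induction 1 as [x0 M0 s Hs|u u' v Hu IH|u v v' Hv IH|y0 N0 l1 a a' l2 Ha IH];
    intros x N Ho.
  - destruct (@occ_subst x N s _ Ho (tr M0) erefl) as [H|[w [H1 H2]]].
    + exists x0, M0; split; [simpl; apply occ_appl; apply occ_here|exact (@occ_tr x N M0 H)].
    + exists x, N; split; [|constructor].
      apply occ_subst_back with w; auto.
      have Hw := @var_tr w M0 H1.
      case: (eqVneq w x0) => [->|Hne].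
      * apply vi_appr; constructor.
      * apply vi_appl. apply vi_arg with (TVar w); [|constructor].
        apply in_map. apply/In_mem. by rewrite FV_mem /= mem_filter Hne.
  - inversion Ho as [|? ? ? ? ? ?|? ? Hx|? ? Hx]; subst.
    + destruct (IH _ _ Hx) as [y [P [H3 H4]]]; exists y, P; split; [apply occ_appl|]; auto.
    + exists x, N; split; [apply occ_appr; auto|constructor].
  - inversion Ho as [|? ? ? ? ? ?|? ? Hx|? ? Hx]; subst.
    + exists x, N; split; [apply occ_appl; auto|constructor].
    + destruct (IH _ _ Hx) as [y [P [H3 H4]]]; exists y, P; split; [apply occ_appr|]; auto.
  - inversion Ho as [|? ? ? b Hb1 Hb2|? ? Hx|? ? Hx]; subst.
    + eexists _, _; split; [apply occ_here|constructor].
    + apply in_app_or in Hb1 as [Hb|[Hb|Hb]].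
      * exists x, N; split; [|constructor]. econstructor; [|eauto].
        apply in_or_app; auto.
      * subst. destruct (IH _ _ Hb2) as [y [P [H5 H6]]]; exists y, P; split; auto.
        econstructor; [|eauto]. apply in_or_app; right; left; auto.
      * exists x, N; split; [|constructor]. econstructor; [|eauto].
        apply in_or_app; right; right; auto.
Qed.

Theorem proposition1 :
  forall (M : lam) (t : term),
    steps (tr M) t ->
    forall (x : var) (N : lam), occurs x N t -> subterm N M.
Proof.
  intros M t H.
  enough (G : forall u v, clos_refl_trans term step u v ->
    (forall x N, occurs x N u -> subterm N M) ->
    forall x N, occurs x N v -> subterm N M).
  { apply (G _ _ H). intros; eapply occ_tr; eauto. }
  induction 1 as [u v Hs|u|u w v _ IH1 _ IH2]; intros Hu.
  - intros x0 N Ho. destruct (step_occ Hs Ho) as [y0 [P [H1 H2]]].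
    eapply subterm_trans; eauto.
  - exact Hu.
  - apply IH2, IH1, Hu.
Qed.
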